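(* Let $G$ be a coloured graph with vertex set $V(G)=V(K_{\mathbb N})$ whose edge set is the (finite) set of edges coloured during the first $t\ge 0$ rounds of a game on $K_{\mathbb N}$ in which Builder selects edges and Painter colours them red or blue. Suppose $G$ is red-bipartite and $e$ is an edge of $K_{\mathbb N}$ not in $E(G)$ (selected by Builder in round $t+1$). Then $e$ can be coloured red or blue so that the resulting coloured graph $G'=G+e$ is red-bipartite and $f(G')\le f(G)+\varphi+1$.
   Context: $\varphi=(1+\sqrt5)/2$ is the golden ratio. A coloured graph is one in which every edge is red or blue. For $V'\subseteq V(G)$, $E[V']$ denotes the set of edges of $G$ with both ends in $V'$ ($E[\emptyset]=\emptyset$). A coloured graph $G$ is red-bipartite if there is a partition $V(G)=V_1\cup V_2$ (one part may be empty) such that no blue edge joins $V_1$ to $V_2$ and no red edge lies in $E[V_1]\cup E[V_2]$; such $(V_1,V_2)$ is a red-bipartition (equivalently, $G$ has no cycle with an odd number of red edges; each component has a red-bipartition unique up to swapping the parts). The potential $f$ is defined on coloured red-bipartite graphs with finitely many nontrivial components: if $G$ is an isolated vertex, $f(G)=0$; if $G$ is connected with at least two vertices and red-bipartition $(V_1,V_2)$, put $p_G(V_i)=\varphi|V_i|+|E[V_i]|$ for $i=1,2$, $a(G)=\max(p_G(V_1),p_G(V_2))$, $b(G)=\min(p_G(V_1),p_G(V_2))$, and $f(G)=\varphi a(G)-\varphi+\max(a(G)-\varphi^3,\,b(G))$; if $G$ has components $G_1,\dots,G_s$ (isolated vertices contributing $0$), then $f(G)=\sum_i f(G_i)$. 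*)

(* Defs.v *)
From HB Require Import structures.
From mathcomp Require Import all_boot all_order all_algebra.
From mathcomp Require Import finmap.
From mathcomp Require Import reals.
From Stdlib Require Import Relation_Operators ClassicalEpsilon.

Set Implicit Arguments.
Unset Strict Implicit.
Unset Printing Implicit Defensive.

Import Order.TTheory GRing.Theory Num.Theory.
Local Open Scope fset_scope.
Local Open Scope ring_scope.

(* A coloured graph on the vertex set nat = V(K_N) with finitely many edges.
   Edges are stored as ordered pairs (u, v) with u < v (see [cg_wf]);
   the colour of an edge x is [cg_col x] (true = red, false = blue). *)
Record cgraph := CGraph {
  cg_edges : {fset (nat * nat)};
  cg_col : nat * nat -> bool
}.

Definition red := true.
Definition blue := false.

(* well-formedness: every stored edge (u,v) has u < v (no loops, each
   unordered edge has a unique representative) *)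
Definition cg_wf (G : cgraph) : Prop :=
  forall x, x \in cg_edges G -> (x.1 < x.2)%N.

Definition add_edge (G : cgraph) (e : nat * nat) (c : bool) : cgraph :=
  CGraph (e |` cg_edges G) (fun x => if x == e then c else cg_col G x).

Definition red_bipartition (G : cgraph) (V1 : nat -> bool) : Prop :=
  forall x, x \in cg_edges G ->
    (cg_col G x = red -> V1 x.1 != V1 x.2) /\
    (cg_col G x = blue -> V1 x.1 = V1 x.2).

Definition red_bipartite (G : cgraph) : Prop :=
  exists V1 : nat -> bool, red_bipartition G V1.

Definition edges_in (G : cgraph) (V' : {fset nat}) : {fset (nat * nat)} :=
  [fset x in cg_edges G | (x.1 \in V') && (x.2 \in V')].

Definition adj (G : cgraph) (u v : nat) : Prop :=
  ((u, v) \in cg_edges G) \/ ((v, u) \in cg_edges G).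

Definition connected_in (G : cgraph) (u v : nat) : Prop :=
  clos_refl_trans nat (adj G) u v.

Definition bool_of (P : Prop) : bool :=
  if excluded_middle_informative P then true else false.

(* vertices incident to at least one edge (the vertices of the nontrivial
   components); all other vertices of K_N are isolated. *)
Definition support (G : cgraph) : {fset nat} :=
  [fset x.1 | x in cg_edges G] `|` [fset x.2 | x in cg_edges G].

Definition comp (G : cgraph) (v : nat) : {fset nat} :=
  [fset u in support G | bool_of (connected_in G u v)].

Definition comps (G : cgraph) : {fset {fset nat}} :=
  [fset comp G v | v in support G].

Definition comp_rbpart (G : cgraph) (C V1 : {fset nat}) : Prop :=
  V1 `<=` C /\
  forall x, x \in cg_edges G -> x.1 \in C ->
    (cg_col G x = red -> (x.1 \in V1) != (x.2 \in V1)) /\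
    (cg_col G x = blue -> (x.1 \in V1) = (x.2 \in V1)).

(* a chosen red-bipartition side of the component C (unique up to swap
   when G is red-bipartite) *)
Definition side1 (G : cgraph) (C : {fset nat}) : {fset nat} :=
  epsilon (inhabits fset0) (comp_rbpart G C).

Definition side2 (G : cgraph) (C : {fset nat}) : {fset nat} :=
  C `\` side1 G C.

Section Potential.
Variable R : realType.

Definition phi : R := (1 + Num.sqrt 5) / 2.

Definition pot (G : cgraph) (V' : {fset nat}) : R :=
  phi * (#|` V'|)%:R + (#|` edges_in G V'|)%:R.

Definition a_comp (G : cgraph) (C : {fset nat}) : R :=
  Num.max (pot G (side1 G C)) (pot G (side2 G C)).

Definition b_comp (G : cgraph) (C : {fset nat}) : R :=
  Num.min (pot G (side1 G C)) (pot G (side2 G C)).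

Definition f_comp (G : cgraph) (C : {fset nat}) : R :=
  phi * a_comp G C - phi + Num.max (a_comp G C - phi ^+ 3) (b_comp G C).

(* f(G): sum over nontrivial components; isolated vertices contribute 0 *)
Definition f (G : cgraph) : R :=
  \sum_(C <- comps G) f_comp G C.

End Potential.

(* Main.v *)
Require Import Defs.
From HB Require Import structures.
From mathcomp Require Import all_boot all_order all_algebra.
From mathcomp Require Import finmap.
From mathcomp Require Import reals.
From mathcomp Require Import ring lra.
From Stdlib Require Import Relation_Operators ClassicalEpsilon Classical.
Set Implicit Arguments.
Unset Strict Implicit.
Unset Printing Implicit Defensive.
Import Order.TTheory GRing.Theory Num.Theory.
Local Open Scope fset_scope.
Local Open Scope ring_scope.
Notation cG := connected_in.
Notation supp := Defs.support.

Lemma bool_ofP (P : Prop) : reflect P (bool_of P).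
Proof. by rewrite /bool_of; case: excluded_middle_informative => h; constructor. Qed.

Lemma adj_sym (G : cgraph) a b : adj G a b -> adj G b a.
Proof. by case=> h; [right|left]. Qed.

Lemma conn_refl (G : cgraph) a : cG G a a.
Proof. exact: rt_refl. Qed.

Lemma conn_trans (G : cgraph) a b d : cG G a b -> cG G b d -> cG G a d.
Proof. exact: rt_trans. Qed.

Lemma conn_step (G : cgraph) a b : adj G a b -> cG G a b.
Proof. exact: rt_step. Qed.

Lemma conn_sym (G : cgraph) a b : cG G a b -> cG G b a.
Proof.
elim=> [x y /adj_sym h|x|x y z _ h1 _ h2]; first exact: rt_step.
  exact: rt_refl.
exact: rt_trans h2 h1.
Qed.

Lemma supp1 (G : cgraph) x : x \in cg_edges G -> x.1 \in supp G.
Proof. by move=> h; rewrite /Defs.support in_fsetU; apply/orP; left; apply/imfsetP; exists x. Qed.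

Lemma supp2 (G : cgraph) x : x \in cg_edges G -> x.2 \in supp G.
Proof. by move=> h; rewrite /Defs.support in_fsetU; apply/orP; right; apply/imfsetP; exists x. Qed.

Lemma adj_supp (G : cgraph) a b : adj G a b -> a \in supp G.
Proof. by case=> h; [have := supp1 h|have := supp2 h]. Qed.

Lemma conn_supp (G : cgraph) a b : cG G a b -> a = b \/ a \in supp G.
Proof.
elim=> [x y /adj_supp h|x|x y z _ h1 _ h2]; [by right|by left|].
by case: h1 => [->|]; [|right].
Qed.

Lemma in_comp (G : cgraph) (w z : nat) : (z \in Defs.comp G w) = (z \in supp G) && bool_of (cG G z w).
Proof. by rewrite /comp !inE. Qed.

Lemma in_compP (G : cgraph) (w z : nat) : reflect (z \in supp G /\ cG G z w) (z \in Defs.comp G w).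
Proof. rewrite in_comp; apply: (iffP andP) => -[h1 /bool_ofP h2] //; split=> //; exact/bool_ofP. Qed.

Lemma comp_eq (G : cgraph) (z y : nat) : cG G z y -> Defs.comp G z = Defs.comp G y.
Proof.
move=> h; apply/fsetP=> t; apply/in_compP/in_compP => -[h1 h2]; split=> //.
  exact: conn_trans h2 h.
exact: conn_trans h2 (conn_sym h).
Qed.

Lemma in_comps (G : cgraph) (C : {fset nat}) : reflect (exists2 w, w \in supp G & C = Defs.comp G w) (C \in Defs.comps G).
Proof.
apply: (iffP idP) => [/imfsetP[w h1 h2]|[w h1 ->]]; first by exists w.
by apply/imfsetP; exists w.
Qed.

Definition lbip (G : cgraph) (C : pred nat) (P : nat -> bool) : Prop :=
  forall x, x \in cg_edges G -> C x.1 ->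
    (cg_col G x = red -> P x.1 != P x.2) /\ (cg_col G x = blue -> P x.1 = P x.2).

Definition closedC (G : cgraph) (C : pred nat) : Prop :=
  forall x, x \in cg_edges G -> C x.1 = C x.2.

Lemma edge_agree (G : cgraph) C P1 P2 x : lbip G C P1 -> lbip G C P2 ->
  x \in cg_edges G -> C x.1 -> (P1 x.1 == P2 x.1) = (P1 x.2 == P2 x.2).
Proof.
move=> H1 H2 hx hc; move: (H1 x hx hc) (H2 x hx hc).
rewrite /red /blue; case: (cg_col G x) => -[a1 a2] [b1 b2].
  by move: (a1 erefl) (b1 erefl); case: (P1 x.1); case: (P1 x.2); case: (P2 x.1); case: (P2 x.2).
by move: (a2 erefl) (b2 erefl); case: (P1 x.1); case: (P1 x.2); case: (P2 x.1); case: (P2 x.2).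
Qed.

Lemma closed_conn (G : cgraph) (C : pred nat) a b : closedC G C -> cG G a b -> C a = C b.
Proof.
move=> hC; elim=> [x y [h|h]|x|x y z _ h1 _ h2].
- exact: (hC _ h).
- by rewrite (hC _ h).
- by [].
- by rewrite h1 h2.
Qed.

Lemma agree (G : cgraph) (C : pred nat) P1 P2 a b : lbip G C P1 -> lbip G C P2 ->
  closedC G C -> cG G a b -> C a -> (P1 a == P2 a) = (P1 b == P2 b).
Proof.
move=> H1 H2 hC hab; elim: hab => [x y [h|h]|x|x y z hxy h1 _ h2] hx.
- exact: (edge_agree H1 H2 h).
- have hy : C y by rewrite (hC _ h).
  by rewrite (edge_agree H1 H2 h).
- by [].
- rewrite h1 // h2 //. by rewrite -(closed_conn hC hxy).
Qed.

Lemma bip_lbip (G : cgraph) W : red_bipartition G W -> lbip G predT W.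
Proof. by move=> h x hx _; apply: h. Qed.

Lemma bip_neg (G : cgraph) W : red_bipartition G W -> red_bipartition G (fun z => ~~ W z).
Proof.
move=> h x hx; have [h1 h2] := h x hx; split.
  by move=> /h1; case: (W x.1); case: (W x.2).
by move=> /h2 ->.
Qed.

Lemma in_filt (C : {fset nat}) (P : pred nat) z :
  (z \in [fset z in C | P z]) = (z \in C) && P z.
Proof. by rewrite inE. Qed.

Definition Fp {R : realType} (x a b : R) : R :=
  x * Num.max a b - x + Num.max (Num.max a b - x ^+ 3) (Num.min a b).

Lemma Fp_sym {R : realType} (x a b : R) : Fp x a b = Fp x b a.
Proof. by rewrite /Fp maxC minC. Qed.

Lemma comp_closed (G : cgraph) w : closedC G (mem (Defs.comp G w)).
Proof.
move=> x hx /=; apply/in_compP/in_compP => -[_ h]; split.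
- exact: supp2 hx.
- apply: conn_trans h; apply: conn_step; right; by rewrite -surjective_pairing.
- exact: supp1 hx.
- apply: conn_trans h; apply: conn_step; left; by rewrite -surjective_pairing.
Qed.

Lemma f_comp_W (R : realType) (G : cgraph) W w : red_bipartition G W -> w \in supp G ->
  f_comp R G (Defs.comp G w) =
  Fp (phi R) (pot R G [fset z in Defs.comp G w | W z]) (pot R G [fset z in Defs.comp G w | ~~ W z]).
Proof.
move=> hW hw; set C := Defs.comp G w.
have hC := @comp_closed G w.
have hV : comp_rbpart G C [fset z in C | W z].
  split; first by apply/fsubsetP => z; rewrite (in_filt C) => /andP[].
  move=> x hx h1; have h2 : x.2 \in C by have := hC x hx; rewrite /= h1 => <-.
  rewrite !(in_filt C) h1 h2 /=; exact: hW.
have hs : comp_rbpart G C (side1 G C).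
  exact: (epsilon_spec (inhabits fset0) (comp_rbpart G C) (ex_intro _ _ hV)).
have l1 : lbip G (mem C) (fun z => z \in side1 G C).
  by move=> x hx h1; case: hs => _ /(_ x hx h1).
have l2 : lbip G (mem C) W by move=> x hx _; apply: hW.
have wC : w \in C by apply/in_compP; split => //; exact: conn_refl.
have hag : forall z, z \in C -> (z \in side1 G C) == W z = ((w \in side1 G C) == W w).
  move=> z hz; apply: (agree l1 l2 hC) => //.
  by case/in_compP: hz.
have sub : forall z, z \in side1 G C -> z \in C.
  by case: hs => /fsubsetP.
rewrite /f_comp /a_comp /b_comp -/(Fp _ _ _) /side2.
case hk: ((w \in side1 G C) == W w).
- have e1 : side1 G C = [fset z in C | W z].
    apply/fsetP => z; rewrite (in_filt C); case hz: (z \in C) => /=.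
      by have := hag z hz; rewrite hk => /eqP.
    by apply/negP => /sub; rewrite hz.
  rewrite e1; congr (Fp _ _ (pot _ _ _)); apply/fsetP => z; rewrite in_fsetD !(in_filt C).
  by case: (z \in C); case: (W z).
- have e1 : side1 G C = [fset z in C | ~~ W z].
    apply/fsetP => z; rewrite (in_filt C); case hz: (z \in C) => /=.
      by have := hag z hz; rewrite hk; case: (z \in side1 G C); case: (W z).
    by apply/negP => /sub; rewrite hz.
  rewrite e1 Fp_sym; congr (Fp _ (pot _ _ _) _); apply/fsetP => z; rewrite in_fsetD !(in_filt C).
  by case: (z \in C); case: (W z).
Qed.

Lemma in_edges_in (G : cgraph) (V : {fset nat}) x :
  (x \in edges_in G V) = (x \in cg_edges G) && ((x.1 \in V) && (x.2 \in V)).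
Proof. by rewrite /edges_in inE. Qed.

Lemma pot_add (R : realType) (G : cgraph) e c (X : {fset nat}) : e \notin cg_edges G ->
  pot R (add_edge G e c) X = pot R G X + ((e.1 \in X) && (e.2 \in X))%:R.
Proof.
move=> he; rewrite /pot -addrA -natrD; congr (_ + _%:R).
case hc: ((e.1 \in X) && (e.2 \in X)).
- have -> : edges_in (add_edge G e c) X = e |` edges_in G X.
    apply/fsetP => x; rewrite in_fset1U !in_edges_in /= in_fset1U.
    by case: eqP => [->|]; rewrite ?hc.
  by rewrite cardfsU1 in_edges_in (negbTE he) addnC.
- have -> : edges_in (add_edge G e c) X = edges_in G X.
    apply/fsetP => x; rewrite !in_edges_in /= in_fset1U.
    by case: eqP => [->|]; rewrite ?hc ?andbF.
  by rewrite addn0.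
Qed.

Lemma pot_union (R : realType) (G : cgraph) (A B : {fset nat}) :
  (forall z, z \in A -> z \notin B) ->
  (forall x, x \in cg_edges G -> x.1 \in A -> x.2 \notin B) ->
  (forall x, x \in cg_edges G -> x.1 \in B -> x.2 \notin A) ->
  pot R G (A `|` B) = pot R G A + pot R G B.
Proof.
move=> hd h1 h2.
have I0 : A `&` B = fset0.
  by apply/fsetP => z; rewrite in_fsetI in_fset0; apply/negP => /andP[/hd/negP].
have c1 : #|` A `|` B| = (#|` A| + #|` B|)%N by rewrite -cardfsUI I0 cardfs0 addn0.
have eU : edges_in G (A `|` B) = edges_in G A `|` edges_in G B.
  apply/fsetP => x; rewrite in_fsetU !in_edges_in !in_fsetU.
  case hx: (x \in cg_edges G) => //=.
  case a1: (x.1 \in A); case a2: (x.2 \in A); case b1: (x.1 \in B); case b2: (x.2 \in B) => //.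
  - by have := h1 x hx a1; rewrite b2.
  - by have := h2 x hx b1; rewrite a2.
have I1 : edges_in G A `&` edges_in G B = fset0.
  apply/fsetP => x; rewrite in_fsetI in_fset0 !in_edges_in.
  apply/negP => /andP[/andP[_ /andP[a1 _]] /andP[_ /andP[b1 _]]].
  by have := hd _ a1; rewrite b1.
have c2 : #|` edges_in G (A `|` B)| = (#|` edges_in G A| + #|` edges_in G B|)%N.
  by rewrite eU -cardfsUI I1 cardfs0 addn0.
rewrite /pot c1 c2 !natrD; ring.
Qed.

Lemma pot_single (R : realType) (G : cgraph) u : cg_wf G -> pot R G [fset u] = phi R.
Proof.
move=> wf; rewrite /pot; have -> : edges_in G [fset u] = fset0.
  apply/fsetP => x; rewrite in_edges_in in_fset0 !in_fset1.
  apply/negP => /andP[hx /andP[/eqP a /eqP b]].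
  by have := wf x hx; rewrite a b ltnn.
by rewrite cardfs1 cardfs0 mulr1 addr0.
Qed.

Lemma pot0 (R : realType) (G : cgraph) : pot R G fset0 = 0.
Proof.
rewrite /pot; have -> : edges_in G fset0 = fset0.
  by apply/fsetP => x; rewrite in_edges_in in_fset0 andbF.
by rewrite cardfs0 mulr0 addr0.
Qed.

Lemma conn_sub (G : cgraph) e c a b : cG G a b -> cG (add_edge G e c) a b.
Proof.
elim=> [x y h|x|x y z _ h1 _ h2]; last exact: conn_trans h1 h2; last exact: conn_refl.
by apply: conn_step; case: h => h; [left|right]; rewrite /= in_fset1U h orbT.
Qed.

Lemma conn_e (G : cgraph) u v c : cG (add_edge G (u, v) c) u v.
Proof. by apply: conn_step; left; rewrite /= in_fset1U eqxx. Qed.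

Definition Nz (G : cgraph) u v z := cG G z u \/ cG G z v.

Lemma Nz_conn (G : cgraph) u v a b : cG G a b -> Nz G u v b -> Nz G u v a.
Proof. by move=> h [h1|h1]; [left|right]; exact: conn_trans h h1. Qed.

Lemma conn_add_inv (G : cgraph) u v c a b : cG (add_edge G (u, v) c) a b ->
  cG G a b \/ (Nz G u v a /\ Nz G u v b).
Proof.
elim=> [x y [h|h]|x|x y z _ h1 _ h2].
- move: h; rewrite /= in_fset1U => /orP[/eqP [-> ->]|h].
    by right; split; [left|right]; exact: conn_refl.
  by left; apply: conn_step; left.
- move: h; rewrite /= in_fset1U => /orP[/eqP [-> ->]|h].
    by right; split; [right|left]; exact: conn_refl.
  by left; apply: conn_step; right.
- by left; exact: conn_refl.
- case: h1 => [h1|[h1 h1']]; case: h2 => [h2|[h2 h2']].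
  + by left; exact: conn_trans h1 h2.
  + by right; split => //; exact: Nz_conn h1 h2.
  + by right; split => //; apply: Nz_conn (conn_sym h2) h1'.
  + by right.
Qed.

Lemma supp_add (G : cgraph) u v c z :
  (z \in supp (add_edge G (u, v) c)) = [|| z \in supp G, z == u | z == v].
Proof.
apply/idP/idP.
- rewrite /Defs.support in_fsetU => /orP[] /imfsetP [x /= hx ->];
  move: hx; rewrite in_fset1U => /orP[/eqP -> /=|hx]; rewrite ?eqxx ?orbT //.
  + by rewrite (supp1 hx).
  + by rewrite (supp2 hx).
- case/or3P => [h|/eqP ->|/eqP ->].
  + move: h; rewrite /Defs.support !in_fsetU => /orP[] /imfsetP [x /= hx ->];
    [apply/orP; left|apply/orP; right]; apply/imfsetP; exists x => //=; by rewrite in_fset1U hx orbT.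
  + by apply: (@supp1 _ (u, v)); rewrite /= in_fset1U eqxx.
  + by apply: (@supp2 _ (u, v)); rewrite /= in_fset1U eqxx.
Qed.

Lemma comp_add_eq (G : cgraph) u v c w : w \in supp G -> ~ cG G w u -> ~ cG G w v ->
  Defs.comp (add_edge G (u, v) c) w = Defs.comp G w.
Proof.
move=> hw nu nv; apply/fsetP => t; apply/in_compP/in_compP => -[h1 h2].
- have ht : cG G t w.
    case: (conn_add_inv h2) => // -[_ [h|h]]; [by case: nu|by case: nv].
  split => //; case: (conn_supp ht) => [->|//]; exact: hw.
- split; first by rewrite supp_add h1.
  exact: conn_sub.
Qed.

Lemma M_decomp (G : cgraph) u v c :
  Defs.comp (add_edge G (u, v) c) u = (u |` Defs.comp G u) `|` (v |` Defs.comp G v).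
Proof.
apply/fsetP => z; rewrite in_fsetU !in_fset1U; apply/in_compP/idP.
- move=> [h1 h2]; case: (conn_add_inv h2) => [h|[[h|h] _]].
  + case: (conn_supp h) => [->|hz]; first by rewrite eqxx.
    by apply/orP; left; apply/orP; right; apply/in_compP.
  + case: (conn_supp h) => [->|hz]; first by rewrite eqxx.
    by apply/orP; left; apply/orP; right; apply/in_compP.
  + case: (conn_supp h) => [->|hz]; first by rewrite eqxx orbT.
    by apply/orP; right; apply/orP; right; apply/in_compP.
- case/orP => /orP[/eqP ->|/in_compP[h1 h2]].
  + by split; [rewrite supp_add eqxx orbT|exact: conn_refl].
  + by split; [rewrite supp_add h1|exact: conn_sub].
  + by split; [rewrite supp_add eqxx !orbT|apply: conn_sym; exact: conn_e].
  + split; first by rewrite supp_add h1.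
    apply: conn_trans (conn_sub _ _ h2) _; apply: conn_sym; exact: conn_e.
Qed.

Lemma bip_sub (G : cgraph) e c W : e \notin cg_edges G ->
  red_bipartition (add_edge G e c) W -> red_bipartition G W.
Proof.
move=> he h x hx; have hx' : x \in cg_edges (add_edge G e c) by rewrite /= in_fset1U hx orbT.
have := h x hx'; rewrite /=; case: eqP => [ex|//]; by move: he; rewrite -ex hx.
Qed.

Lemma bip_add (G : cgraph) u v c W : red_bipartition G W ->
  (c = red -> W u != W v) -> (c = blue -> W u = W v) ->
  red_bipartition (add_edge G (u, v) c) W.
Proof.
move=> h hr hb x; rewrite /= in_fset1U; case: eqP => [->|_] /= hx; first by split.
exact: h.
Qed.

Lemma bip_e (G : cgraph) u v c W : red_bipartition (add_edge G (u, v) c) W ->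
  (c = red -> W u != W v) /\ (c = blue -> W u = W v).
Proof.
move=> h; have := h (u, v); rewrite /= in_fset1U eqxx /=; by move=> /(_ erefl).
Qed.

Lemma f_split (R : realType) (G : cgraph) u v : Defs.f R G =
  \sum_(C <- [fset C in Defs.comps G | (u \in C) || (v \in C)]) f_comp R G C +
  \sum_(C <- [fset C in Defs.comps G | ~~ ((u \in C) || (v \in C))]) f_comp R G C.
Proof. by rewrite /Defs.f (big_fsetID _ (fun C : {fset nat} => (u \in C) || (v \in C))). Qed.

Section Add.
Variables (R : realType) (G : cgraph) (u v : nat) (c : bool).
Hypothesis huv : (u, v) \notin cg_edges G.
Let G' := add_edge G (u, v) c.

Lemma restA C : C \in Defs.comps G' -> ~~ ((u \in C) || (v \in C)) ->
  exists w, [/\ w \in supp G, ~ cG G w u, ~ cG G w v & C = Defs.comp G w].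
Proof.
case/in_comps => w hw -> hP.
have nu : ~ cG G w u.
  move=> h; move: hP; rewrite negb_or => /andP[/negP hu _]; apply: hu.
  apply/in_compP; split; first by rewrite supp_add eqxx orbT.
  exact: conn_sub (conn_sym h).
have nv : ~ cG G w v.
  move=> h; move: hP; rewrite negb_or => /andP[_ /negP hu]; apply: hu.
  apply/in_compP; split; first by rewrite supp_add eqxx !orbT.
  exact: conn_sub (conn_sym h).
have hwG : w \in supp G.
  move: hw; rewrite supp_add => /or3P[//|/eqP e|/eqP e]; exfalso.
  - by apply: nu; rewrite e; exact: conn_refl.
  - by apply: nv; rewrite e; exact: conn_refl.
by exists w; split => //; rewrite comp_add_eq.
Qed.

Lemma restB C : C \in Defs.comps G -> ~~ ((u \in C) || (v \in C)) ->
  exists w, [/\ w \in supp G, ~ cG G w u, ~ cG G w v & C = Defs.comp G w].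
Proof.
case/in_comps => w hw -> hP.
have key : forall t, ~~ (t \in Defs.comp G w) -> ~ cG G w t.
  move=> t ht h; move/negP: ht; apply; apply/in_compP; split; last exact: conn_sym.
  by case: (conn_supp (conn_sym h)) => [->|].
move: hP; rewrite negb_or => /andP[/key nu /key nv].
by exists w.
Qed.

Lemma restC w : w \in supp G -> ~ cG G w u -> ~ cG G w v ->
  [/\ Defs.comp G w \in Defs.comps G, Defs.comp G w \in Defs.comps G',
      ~~ ((u \in Defs.comp G w) || (v \in Defs.comp G w)) & Defs.comp G' w = Defs.comp G w].
Proof.
move=> hw nu nv; have e := comp_add_eq c hw nu nv; split => //.
- by apply/in_comps; exists w.
- by apply/in_comps; exists w => //; rewrite /G' supp_add hw.
- rewrite negb_or; apply/andP; split; apply/negP => /in_compP [_ h].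
  + by apply: nu; apply: conn_sym.
  + by apply: nv; apply: conn_sym.
Qed.

Lemma rest_eq W : red_bipartition G' W ->
  \sum_(C <- [fset C in Defs.comps G' | ~~ ((u \in C) || (v \in C))]) f_comp R G' C =
  \sum_(C <- [fset C in Defs.comps G | ~~ ((u \in C) || (v \in C))]) f_comp R G C.
Proof.
move=> hW; have hWG := bip_sub huv hW.
apply: eq_fbig.
- move=> C; rewrite !inE; apply/andP/andP => -[h1 h2].
  + have [w [a b d ->]] := restA h1 h2; by have [] := restC a b d.
  + have [w [a b d ->]] := restB h1 h2; have [h0 h hP e] := restC a b d; by split.
- move=> C; rewrite inE => /andP[h1 h2].
  have [w [a b d eC]] := restA h1 h2.
  have [_ _ hP e] := restC a b d.
  have wG' : w \in supp G' by rewrite /G' supp_add a.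
  rewrite eC -{1}e (f_comp_W R hW wG') (f_comp_W R hWG a) e.
  have hu : u \notin Defs.comp G w by move: hP; rewrite negb_or => /andP[].
  by rewrite /G' !pot_add //= !(in_filt (Defs.comp G w)) (negbTE hu) /= !addr0.
Qed.

Lemma PG'_set : [fset C in Defs.comps G' | (u \in C) || (v \in C)] = [fset Defs.comp G' u].
Proof.
apply/fsetP => C; rewrite !inE; apply/andP/eqP.
- case=> /in_comps [w hw ->] /orP[] /in_compP [_ h].
  + exact: comp_eq (conn_sym h).
  + apply: comp_eq; apply: conn_sym; exact: conn_trans (conn_e G u v c) h.
- move=> ->; split; first by apply/in_comps; exists u => //; rewrite /G' supp_add eqxx orbT.
  by apply/orP; left; apply/in_compP; split; [rewrite /G' supp_add eqxx orbT|exact: conn_refl].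
Qed.

Lemma PG_mem C : (C \in Defs.comps G) && ((u \in C) || (v \in C)) <->
  (u \in supp G /\ C = Defs.comp G u) \/ (v \in supp G /\ C = Defs.comp G v).
Proof.
split.
- case/andP => /in_comps [w hw ->] /orP[] /in_compP [h1 h].
  + by left; split => //; exact: comp_eq (conn_sym h).
  + by right; split => //; exact: comp_eq (conn_sym h).
- case=> -[h ->]; apply/andP; (split; first by apply/in_comps; exists u + exists v).
  + by apply/orP; left; apply/in_compP; split => //; exact: conn_refl.
  + by apply/orP; right; apply/in_compP; split => //; exact: conn_refl.
Qed.

Lemma PG_conn : u != v -> cG G u v ->
  \sum_(C <- [fset C in Defs.comps G | (u \in C) || (v \in C)]) f_comp R G C = f_comp R G (Defs.comp G u).
Proof.
move=> neq h.
have hu : u \in supp G by case: (conn_supp h) => // e; move: neq; rewrite e eqxx.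
have hv : v \in supp G by case: (conn_supp (conn_sym h)) => // e; move: neq; rewrite e eqxx.
have ev : Defs.comp G v = Defs.comp G u by apply: comp_eq; exact: conn_sym.
have -> : [fset C in Defs.comps G | (u \in C) || (v \in C)] = [fset Defs.comp G u].
  apply/fsetP => C; rewrite in_fset1; apply/idP/eqP.
  - rewrite inE => /PG_mem [[_ ->]|[_ ->]] //.
  - move=> ->; rewrite inE; apply/PG_mem; by left.
by rewrite big_seq_fset1.
Qed.

Lemma PG_nconn : ~ cG G u v ->
  \sum_(C <- [fset C in Defs.comps G | (u \in C) || (v \in C)]) f_comp R G C =
  (if u \in supp G then f_comp R G (Defs.comp G u) else 0) +
  (if v \in supp G then f_comp R G (Defs.comp G v) else 0).
Proof.
move=> nc.
have dif : u \in supp G -> Defs.comp G u != Defs.comp G v.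
  move=> hu; apply/negP => /eqP e.
  have : u \in Defs.comp G u by apply/in_compP; split => //; exact: conn_refl.
  by rewrite e => /in_compP [_ h]; apply: nc.
have mem C : C \in [fset C in Defs.comps G | (u \in C) || (v \in C)] =
  ((u \in supp G) && (C == Defs.comp G u)) || ((v \in supp G) && (C == Defs.comp G v)).
  rewrite inE; apply/idP/idP.
  - by move/PG_mem => [[-> ->]|[-> ->]]; rewrite eqxx ?orbT.
  - by case/orP => /andP[h /eqP ->]; apply/PG_mem; [left|right].
case hu: (u \in supp G); case hv: (v \in supp G).
- have -> : [fset C in Defs.comps G | (u \in C) || (v \in C)] = Defs.comp G u |` [fset Defs.comp G v].
    by apply/fsetP => C; rewrite mem in_fset1U in_fset1 hu hv.
  by rewrite big_fsetU1 ?big_seq_fset1 // in_fset1 dif.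
- have -> : [fset C in Defs.comps G | (u \in C) || (v \in C)] = [fset Defs.comp G u].
    by apply/fsetP => C; rewrite mem in_fset1 hu hv orbF.
  by rewrite big_seq_fset1 addr0.
- have -> : [fset C in Defs.comps G | (u \in C) || (v \in C)] = [fset Defs.comp G v].
    by apply/fsetP => C; rewrite mem in_fset1 hu hv.
  by rewrite big_seq_fset1 add0r.
- have -> : [fset C in Defs.comps G | (u \in C) || (v \in C)] = fset0.
    by apply/fsetP => C; rewrite mem in_fset0 hu hv.
  by rewrite big_seq_fset0 addr0.
Qed.

Lemma f_G'_form W : red_bipartition G' W ->
  Defs.f R G' = Fp (phi R) (pot R G' [fset z in Defs.comp G' u | W z])
                         (pot R G' [fset z in Defs.comp G' u | ~~ W z]) +
  \sum_(C <- [fset C in Defs.comps G | ~~ ((u \in C) || (v \in C))]) f_comp R G C.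
Proof.
move=> hW; rewrite (f_split R G' u v) PG'_set big_seq_fset1 (rest_eq hW).
have hu : u \in supp G' by rewrite /G' supp_add eqxx orbT.
by rewrite (f_comp_W R hW hu).
Qed.

Lemma filtU (A B : {fset nat}) (P : pred nat) :
  [fset z in A `|` B | P z] = [fset z in A | P z] `|` [fset z in B | P z].
Proof.
apply/fsetP => z; rewrite in_fsetU !(in_filt (A `|` B)) !(in_filt A) !(in_filt B) in_fsetU.
by case: (z \in A); case: (z \in B); case: (P z).
Qed.

Lemma in_Cx t z : z \in t |` Defs.comp G t -> cG G z t.
Proof. by rewrite in_fset1U => /orP[/eqP ->|/in_compP[]]; [exact: conn_refl|]. Qed.

Lemma potM_nconn (P : pred nat) : ~ cG G u v ->
  pot R G' [fset z in Defs.comp G' u | P z] =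
  pot R G [fset z in u |` Defs.comp G u | P z] + pot R G [fset z in v |` Defs.comp G v | P z] + (P u && P v)%:R.
Proof.
move=> nc.
have uM : u \in Defs.comp G' u by apply/in_compP; split; [rewrite /G' supp_add eqxx orbT|exact: conn_refl].
have vM : v \in Defs.comp G' u by apply/in_compP; split; [rewrite /G' supp_add eqxx !orbT|apply: conn_sym; exact: conn_e].
rewrite /G' pot_add // /= !(in_filt (Defs.comp (add_edge G (u, v) c) u)) uM vM /=.
congr (_ + _); rewrite M_decomp filtU; apply: pot_union.
- move=> z; rewrite !(in_filt (_ |` _)) => /andP[/in_Cx h1 _]; apply/negP => /andP[/in_Cx h2 _].
  by apply: nc; exact: conn_trans (conn_sym h1) h2.
- move=> x hx; rewrite !(in_filt (_ |` _)) => /andP[/in_Cx h1 _]; apply/negP => /andP[/in_Cx h2 _].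
  apply: nc; apply: conn_trans (conn_sym h1) _; apply: conn_trans _ h2.
  by apply: conn_step; left; rewrite -surjective_pairing.
- move=> x hx; rewrite !(in_filt (_ |` _)) => /andP[/in_Cx h1 _]; apply/negP => /andP[/in_Cx h2 _].
  apply: nc; apply: conn_trans (conn_sym h2) _; apply: conn_trans _ h1.
  by apply: conn_step; right; rewrite -surjective_pairing.
Qed.

Lemma M_conn : u != v -> cG G u v -> Defs.comp G' u = Defs.comp G u.
Proof.
move=> neq h.
have hu : u \in supp G by case: (conn_supp h) => // e; move: neq; rewrite e eqxx.
have hv : v \in supp G by case: (conn_supp (conn_sym h)) => // e; move: neq; rewrite e eqxx.
have ev : Defs.comp G v = Defs.comp G u by apply: comp_eq; exact: conn_sym.
have uC : u \in Defs.comp G u by apply/in_compP; split => //; exact: conn_refl.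
have vC : v \in Defs.comp G u by apply/in_compP; split => //; exact: conn_sym.
rewrite /G' M_decomp ev; apply/fsetP => z; rewrite in_fsetU !in_fset1U.
apply/idP/idP; last by move=> ->; rewrite !orbT. by case/or3P => [/orP[/eqP ->|]|/eqP ->|].
Qed.

End Add.


Lemma piece (R : realType) (G : cgraph) W t : cg_wf G -> red_bipartition G W -> W t ->
  (t \in supp G -> f_comp R G (Defs.comp G t) =
     Fp (phi R) (pot R G [fset z in t |` Defs.comp G t | W z]) (pot R G [fset z in t |` Defs.comp G t | ~~ W z])) /\
  (t \notin supp G -> pot R G [fset z in t |` Defs.comp G t | W z] = phi R /\
                      pot R G [fset z in t |` Defs.comp G t | ~~ W z] = 0).
Proof.
move=> wf hW hWt; split.
- move=> ht; have -> : t |` Defs.comp G t = Defs.comp G t.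
    apply/fsetP => z; rewrite in_fset1U; case: eqP => [->|] //=.
    by apply/esym/in_compP; split => //; exact: conn_refl.
  exact: f_comp_W.
- move=> ht; have -> : t |` Defs.comp G t = [fset t].
    apply/fsetP => z; rewrite in_fset1U in_fset1; case: eqP => [->|] //= nz.
    apply/negP => /in_compP [hz hc]; case: (conn_supp (conn_sym hc)) => [e|]; [by case: nz|by rewrite (negbTE ht)].
  have -> : [fset z in [fset t] | W z] = [fset t].
    by apply/fsetP => z; rewrite (in_filt [fset t]) in_fset1; case: eqP => [->|]; rewrite ?hWt.
  have -> : [fset z in [fset t] | ~~ W z] = fset0.
    by apply/fsetP => z; rewrite (in_filt [fset t]) in_fset1 in_fset0; case: eqP => [->|]; rewrite ?hWt.
  by rewrite pot_single // pot0.
Qed.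
Lemma x3 {R : realType} {x : R} : x * x = x + 1 -> x ^+ 3 = 2 * x + 1.
Proof. move=> hx2. rewrite !exprS expr0 mulr1 hx2 mulrDr mulr1 hx2. ring. Qed.

Lemma Fp4 {R : realType} (x a b : R) : x * x = x + 1 -> 1 <= x ->
  Fp x a b = Num.max (Num.max (x * a + a - 3 * x - 1) (x * b + b - 3 * x - 1))
                     (Num.max (x * a + b - x) (x * b + a - x)).
Proof.
move=> h1 h2; rewrite /Fp (x3 h1).
case: (leP a b) => hab.
- have e1 : Num.max (x * a + a - 3 * x - 1) (x * b + b - 3 * x - 1) = x * b + b - 3 * x - 1.
    by apply/max_idPr; nra.
  have e2 : Num.max (x * a + b - x) (x * b + a - x) = x * b + a - x.
    by apply/max_idPr; nra.
  rewrite e1 e2; case: (leP (b - (2 * x + 1)) a) => h.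
  + by rewrite max_r ?max_r //; lra.
  + by rewrite max_l ?max_l //; lra.
- have e1 : Num.max (x * a + a - 3 * x - 1) (x * b + b - 3 * x - 1) = x * a + a - 3 * x - 1.
    by apply/max_idPl; nra.
  have e2 : Num.max (x * a + b - x) (x * b + a - x) = x * a + b - x.
    by apply/max_idPl; nra.
  rewrite e1 e2; case: (leP (a - (2 * x + 1)) b) => h.
  + by rewrite max_r ?max_r //; lra.
  + by rewrite max_l ?max_l //; lra.
Qed.

Lemma or_le {R : realType} (a b d : R) : (d < a -> b <= d) -> a <= d \/ b <= d.
Proof. move=> H; case: (leP a d) => h; [by left|right; exact: H]. Qed.

Lemma N1 {R : realType} (x p q r s : R) : x * x = x + 1 -> 8 < 5 * x -> 10 * x < 17 ->
  Fp x (p + r + 1) (q + s) <= Fp x p q + Fp x r s + x + 1 \/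
  Fp x (p + s) (q + r) <= Fp x p q + Fp x r s + x + 1.
Proof.
move=> hx2 hxl hxu.
have x1 : 1 <= x by lra.
have [f1 [f2 [f3 f4]]] : [/\ x * p + p - 3 * x - 1 <= Fp x p q, x * q + q - 3 * x - 1 <= Fp x p q,
   x * p + q - x <= Fp x p q & x * q + p - x <= Fp x p q].
  by rewrite (Fp4 p q hx2 x1) !le_max !lexx !orbT.
have [g1 [g2 [g3 g4]]] : [/\ x * r + r - 3 * x - 1 <= Fp x r s, x * s + s - 3 * x - 1 <= Fp x r s,
   x * r + s - x <= Fp x r s & x * s + r - x <= Fp x r s].
  by rewrite (Fp4 r s hx2 x1) !le_max !lexx !orbT.
move: f1 f2 f3 f4 g1 g2 g3 g4.
rewrite (Fp4 (p + r + 1) _ hx2 x1) (Fp4 (p + s) _ hx2 x1).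
move: (Fp x p q) (Fp x r s) => F1 F2 f1 f2 f3 f4 g1 g2 g3 g4.
apply: or_le; rewrite !lt_max => hb.
have x0 : 0 <= x by lra.
rewrite !ge_max.
by case/orP: hb => /orP[] hb; apply/andP; split; apply/andP; split; nra.
Qed.

Lemma N2 {R : realType} (x r s : R) : x * x = x + 1 -> 8 < 5 * x -> 10 * x < 17 ->
  Fp x (x + r + 1) (0 + s) <= Fp x r s + x + 1 \/
  Fp x (x + s) (0 + r) <= Fp x r s + x + 1.
Proof.
move=> hx2 hxl hxu.
have x1 : 1 <= x by lra.
have [g1 [g2 [g3 g4]]] : [/\ x * r + r - 3 * x - 1 <= Fp x r s, x * s + s - 3 * x - 1 <= Fp x r s,
   x * r + s - x <= Fp x r s & x * s + r - x <= Fp x r s].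
  by rewrite (Fp4 r s hx2 x1) !le_max !lexx !orbT.
move: g1 g2 g3 g4.
rewrite (Fp4 (x + r + 1) _ hx2 x1) (Fp4 (x + s) _ hx2 x1).
move: (Fp x r s) => F2 g1 g2 g3 g4.
apply: or_le; rewrite !lt_max => hb.
have x0 : 0 <= x by lra.
rewrite !ge_max.
by case/orP: hb => /orP[] hb; apply/andP; split; apply/andP; split; nra.
Qed.

Lemma N2' {R : realType} (x p q : R) : x * x = x + 1 -> 8 < 5 * x -> 10 * x < 17 ->
  Fp x (p + x + 1) (q + 0) <= Fp x p q + x + 1 \/
  Fp x (p + 0) (q + x) <= Fp x p q + x + 1.
Proof.
move=> hx2 hxl hxu.
have x1 : 1 <= x by lra.
have [g1 [g2 [g3 g4]]] : [/\ x * p + p - 3 * x - 1 <= Fp x p q, x * q + q - 3 * x - 1 <= Fp x p q,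
   x * p + q - x <= Fp x p q & x * q + p - x <= Fp x p q].
  by rewrite (Fp4 p q hx2 x1) !le_max !lexx !orbT.
move: g1 g2 g3 g4.
rewrite (Fp4 (p + x + 1) _ hx2 x1) (Fp4 (p + 0) _ hx2 x1).
move: (Fp x p q) => F2 g1 g2 g3 g4.
apply: or_le; rewrite !lt_max => hb.
have x0 : 0 <= x by lra.
rewrite !ge_max.
by case/orP: hb => /orP[] hb; apply/andP; split; apply/andP; split; nra.
Qed.

Lemma N3 {R : realType} (x : R) : x * x = x + 1 -> 8 < 5 * x -> 10 * x < 17 ->
  Fp x (x + 0) (0 + x) <= x + 1.
Proof.
move=> hx2 hxl hxu. rewrite addr0 add0r /Fp maxxx minxx (x3 hx2).
have -> : Num.max (x - (2 * x + 1)) x = x by rewrite max_r //; lra.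
lra.
Qed.

Lemma Nall {R : realType} (x p q r s : R) (bu bv : bool) :
  x * x = x + 1 -> 8 < 5 * x -> 10 * x < 17 ->
  (~~ bu -> p = x /\ q = 0) -> (~~ bv -> r = x /\ s = 0) ->
  Fp x (p + r + 1) (q + s + 0) <= (if bu then Fp x p q else 0) + (if bv then Fp x r s else 0) + x + 1 \/
  Fp x (p + s + 0) (q + r + 0) <= (if bu then Fp x p q else 0) + (if bv then Fp x r s else 0) + x + 1.
Proof.
move=> h1 h2 h3; case: bu => [_|/(_ erefl) [-> ->]]; case: bv => [_|/(_ erefl) [-> ->]].
- by rewrite !addr0; apply: N1.
- by have := N2' p q h1 h2 h3; rewrite !addr0 ?add0r.
- by have := N2 r s h1 h2 h3; rewrite !addr0 !add0r.
- by right; have := N3 h1 h2 h3; rewrite !addr0 !add0r.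
Qed.

Lemma Fp_lip {R : realType} (x p q a b : R) : x * x = x + 1 -> 8 < 5 * x -> 10 * x < 17 ->
  0 <= a <= 1 -> 0 <= b <= 1 -> Fp x (p + a) (q + b) <= Fp x p q + x + 1.
Proof.
move=> hx2 hxl hxu /andP[a0 a1] /andP[b0 b1].
have x1 : 1 <= x by lra.
have [g1 [g2 [g3 g4]]] : [/\ x * p + p - 3 * x - 1 <= Fp x p q, x * q + q - 3 * x - 1 <= Fp x p q,
   x * p + q - x <= Fp x p q & x * q + p - x <= Fp x p q].
  by rewrite (Fp4 p q hx2 x1) !le_max !lexx !orbT.
move: g1 g2 g3 g4; rewrite (Fp4 (p + a) _ hx2 x1).
move: (Fp x p q) => F2 g1 g2 g3 g4.
have x0 : 0 <= x by lra.
rewrite !ge_max; apply/andP; split; apply/andP; split; nra.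
Qed.

Lemma phi_facts (R : realType) : let x := phi R in x * x = x + 1 /\ 8 < 5 * x /\ 10 * x < 17.
Proof.
rewrite /phi; set s := Num.sqrt 5.
have s0 : 0 <= s by rewrite sqrtr_ge0.
have s2 : s * s = 5 by rewrite -expr2 sqr_sqrtr // ler0n.
split; [|split]; nra.
Qed.

Unset Implicit Arguments.
Set Strict Implicit.
Lemma b01 {R : realType} (b : bool) : 0 <= (b%:R : R) <= 1.
Proof. by case: b; rewrite /= ?mulr1n ?mulr0n ?ler01 ?lexx. Qed.

Theorem lemma1 (R : realType) (G : cgraph) (e : nat * nat) :
  cg_wf G -> red_bipartite G ->
  (e.1 < e.2)%N -> e \notin cg_edges G ->
  exists c : bool,
    red_bipartite (add_edge G e c) /\
    f R (add_edge G e c) <= f R G + phi R + 1.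
Proof.
case: e => u v /= wf [W0 hW0] luv huv.
have neq : u != v by rewrite neq_ltn luv.
have [h2 [h3 h4]] := phi_facts R.
set Rest := \sum_(C <- [fset C in Defs.comps G | ~~ ((u \in C) || (v \in C))]) f_comp R G C.
have fG := f_split R G u v.
case: (classic (cG G u v)) => hc.
- exists (W0 u != W0 v).
  have hb : red_bipartition (add_edge G (u, v) (W0 u != W0 v)) W0.
    apply: bip_add => //; rewrite /red /blue.
    by move=> /negbFE /eqP.
  split; first by exists W0.
  have hu : u \in supp G by case: (conn_supp hc) => // e; move: neq; rewrite e eqxx.
  rewrite (f_G'_form R huv hb) (M_conn _ neq hc) fG (PG_conn R neq hc) -/Rest.
  rewrite (f_comp_W R hW0 hu) !pot_add //.
  set X := pot R G _; set Y := pot R G _.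
  move: (_ && _) (_ && _) => b1 b2.
  have := Fp_lip X Y h2 h3 h4 (b01 b2) (b01 b1).
  move=> H; lra.
- have mkW : forall c, exists W, red_bipartition (add_edge G (u, v) c) W /\ W u.
    move=> c.
    pose Wf (fl : bool) z := W0 z (+) (fl && bool_of (cG G z v)).
    have hWf fl : red_bipartition G (Wf fl).
      move=> x hx.
      have ex : bool_of (cG G x.1 v) = bool_of (cG G x.2 v).
        have ad : cG G x.1 x.2 by apply: conn_step; left; rewrite -surjective_pairing.
        apply/bool_ofP/bool_ofP => h.
        + exact: conn_trans (conn_sym ad) h.
        + exact: conn_trans ad h.
      have [k1 k2] := hW0 x hx; rewrite /Wf ex; move: (fl && _) => k; split.
      + by move/k1; case: (W0 x.1); case: (W0 x.2); case: k.
      + by move/k2 ->.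
    have Wu fl : Wf fl u = W0 u.
      rewrite /Wf; case: bool_ofP => //; by rewrite andbF addbF.
    have Wv fl : Wf fl v = W0 v (+) fl.
      rewrite /Wf; case: bool_ofP => [_|[]]; last exact: conn_refl.
      by rewrite andbT.
    set fl := W0 u (+) W0 v (+) c.
    have hb : red_bipartition (add_edge G (u, v) c) (Wf fl).
      apply: bip_add => //; rewrite Wu Wv /fl /red /blue => ->;
      by case: (W0 u); case: (W0 v).
    case hu: (Wf fl u); [exists (Wf fl) | exists (fun z => ~~ Wf fl z)]; split => //.
    + exact: bip_neg.
    + by rewrite hu.
  have [Wb [hb hbu]] := mkW blue.
  have [Wr [hr hru]] := mkW red.
  have hbv : Wb v by rewrite -((bip_e hb).2 erefl).
  have hrv : Wr v = false.
    by have := (bip_e hr).1 erefl; rewrite hru; case: (Wr v).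
  have hbG := bip_sub huv hb.
  have hrG := bip_sub huv hr.
  have cl : closedC G predT by [].
  have agU z : z \in u |` Defs.comp G u -> Wr z = Wb z.
    move=> /in_Cx hz; apply/eqP.
    by rewrite (agree (bip_lbip hrG) (bip_lbip hbG) cl hz) // hru hbu.
  have agV z : z \in v |` Defs.comp G v -> Wr z = ~~ Wb z.
    move=> /in_Cx hz.
    have := agree (bip_lbip hrG) (bip_lbip hbG) cl hz erefl.
    by rewrite hrv hbv; case: (Wr z); case: (Wb z).
  set Cu := u |` Defs.comp G u.
  set Cv := v |` Defs.comp G v.
  have eU1 : [fset z in Cu | Wr z] = [fset z in Cu | Wb z].
    apply/fsetP => z; rewrite !(in_filt Cu); case hz: (z \in Cu) => //=; exact: agU.
  have eU2 : [fset z in Cu | ~~ Wr z] = [fset z in Cu | ~~ Wb z].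
    apply/fsetP => z; rewrite !(in_filt Cu); case hz: (z \in Cu) => //=; by rewrite agU.
  have eV1 : [fset z in Cv | Wr z] = [fset z in Cv | ~~ Wb z].
    apply/fsetP => z; rewrite !(in_filt Cv); case hz: (z \in Cv) => //=; exact: agV.
  have eV2 : [fset z in Cv | ~~ Wr z] = [fset z in Cv | Wb z].
    apply/fsetP => z; rewrite !(in_filt Cv); case hz: (z \in Cv) => //=; by rewrite agV // negbK.
  set p := pot R G [fset z in Cu | Wb z].
  set q := pot R G [fset z in Cu | ~~ Wb z].
  set r := pot R G [fset z in Cv | Wb z].
  set s := pot R G [fset z in Cv | ~~ Wb z].
  have fb : f R (add_edge G (u, v) blue) = Fp (phi R) (p + r + 1) (q + s + 0) + Rest.
    rewrite (f_G'_form R huv hb) (potM_nconn R blue huv Wb hc).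
    rewrite (potM_nconn R blue huv (fun z => ~~ Wb z) hc) /= hbu hbv /=.
    by rewrite mulr1n mulr0n.
  have fr : f R (add_edge G (u, v) red) = Fp (phi R) (p + s + 0) (q + r + 0) + Rest.
    rewrite (f_G'_form R huv hr) (potM_nconn R red huv Wr hc).
    rewrite (potM_nconn R red huv (fun z => ~~ Wr z) hc) /= hru hrv /=.
    by rewrite -/Cu -/Cv eU1 eU2 eV1 eV2 mulr0n.
  have [pu1 pu2] := piece R wf hbG hbu.
  have [pv1 pv2] := piece R wf hbG hbv.
  have fGv : f R G = (if u \in supp G then Fp (phi R) p q else 0) +
                     (if v \in supp G then Fp (phi R) r s else 0) + Rest.
    rewrite fG (PG_nconn R hc) -/Rest.
    case: ifP => hu; case: ifP => hv; rewrite ?pu1 ?pv1 //.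
  have := @Nall R (phi R) p q r s (u \in supp G) (v \in supp G) h2 h3 h4 pu2 pv2.
  case => H; [exists blue | exists red]; split.
  + by exists Wb.
  + rewrite fb fGv; lra.
  + by exists Wr.
  + rewrite fr fGv; lra.
Qed.
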